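(* Consider the two-layer system $$\dot{\mathbf{q}}=\mathbf{f}_0(\mathbf{q})+\mathbf{g}_0(\mathbf{q})\boldsymbol{\xi},\qquad \dot{\boldsymbol{\xi}}=\mathbf{f}_1(\mathbf{q},\boldsymbol{\xi})+\mathbf{g}_1(\mathbf{q},\boldsymbol{\xi})\mathbf{u},$$ with $\mathbf{q}\in\mathbb{R}^n$, $\boldsymbol{\xi}\in\mathbb{R}^p$, $\mathbf{u}\in\mathbb{R}^m$ and locally Lipschitz $\mathbf{f}_0,\mathbf{g}_0,\mathbf{f}_1,\mathbf{g}_1$. Let $h_0:\mathbb{R}^n\to\mathbb{R}$ be continuously differentiable, with $\mathcal{C}_0=\{\mathbf{q}:h_0(\mathbf{q})\ge0\}$. Suppose there exist a continuously differentiable $\mathbf{k}_0:\mathbb{R}^n\to\mathbb{R}^p$ and constants $\alpha,\varepsilon>0$ such that for all $\mathbf{q}$ $$L_{\mathbf{f}_0}h_0(\mathbf{q})+L_{\mathbf{g}_0}h_0(\mathbf{q})\mathbf{k}_0(\mathbf{q})\ge-\alpha h_0(\mathbf{q})+\tfrac{1}{\varepsilon}\|L_{\mathbf{g}_0}h_0(\mathbf{q})\|^2.$$ Suppose further there exist a tracking controller $\mathbf{k}:\mathbb{R}^n\times\mathbb{R}^p\to\mathbb{R}^m$, a continuously differentiable $V:\mathbb{R}^n\times\mathbb{R}^p\to\mathbb{R}_{\ge0}$ and constants $\gamma_1,\gamma_2,\gamma,\delta>0$ such that for all $(\mathbf{q},\boldsymbol{\xi})$: $\gamma_1\|\boldsymbol{\xi}-\mathbf{k}_0(\mathbf{q})\|^2\le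 V(\mathbf{q},\boldsymbol{\xi})\le\gamma_2\|\boldsymbol{\xi}-\mathbf{k}_0(\mathbf{q})\|^2$ and $\dot V(\mathbf{q},\boldsymbol{\xi})\le-\gamma V(\mathbf{q},\boldsymbol{\xi})+\delta$ along the closed-loop system with $\mathbf{u}=\mathbf{k}(\mathbf{q},\boldsymbol{\xi})$. Let $\mu>0$, $$h(\mathbf{q},\boldsymbol{\xi})=h_0(\mathbf{q})-\frac{1}{\mu\gamma_1}\Big(V(\mathbf{q},\boldsymbol{\xi})-\frac{\delta}{\alpha}\Big),\qquad \mathcal{C}=\{(\mathbf{q},\boldsymbol{\xi}):h(\mathbf{q},\boldsymbol{\xi})\ge0\}.$$ If $\gamma\ge\alpha+\frac{\varepsilon\mu}{4}$, then $\mathcal{C}$ is forward invariant for the closed-loop system with $\mathbf{u}=\mathbf{k}(\mathbf{q},\boldsymbol{\xi})$.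
   Context: $L_{\mathbf{f}_0}h_0=\nabla h_0\cdot\mathbf{f}_0$, $L_{\mathbf{g}_0}h_0=\nabla h_0^\top\mathbf{g}_0$; $\dot V$ denotes the derivative of $V$ along the closed-loop vector field. A set is forward invariant if every closed-loop trajectory starting in it remains in it on its maximal interval of existence. *)

(* Defs.v *)
From HB Require Import structures.
From mathcomp Require Import all_boot all_order all_algebra.
From mathcomp Require Import all_classical all_reals all_analysis.
Set Implicit Arguments. Unset Strict Implicit. Unset Printing Implicit Defensive.
Import Order.TTheory GRing.Theory Num.Theory.
Import numFieldNormedType.Exports.
Local Open Scope classical_set_scope.
Local Open Scope ring_scope.

Section Defs.
Variable R : realType.

Definition ebasis (m : nat) (i : 'I_m) : 'cV[R]_m := delta_mx i 0.

Definition grad (m : nat) (f : 'cV[R]_m -> R) (x : 'cV[R]_m) : 'cV[R]_m :=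
  \col_i ('D_(ebasis i) f x).

Definition dotv (m : nat) (u v : 'cV[R]_m) : R := \sum_i u i 0 * v i 0.
Definition sqnorm (m : nat) (v : 'cV[R]_m) : R := dotv v v.

Definition C1 (m : nat) (f : 'cV[R]_m -> R) : Prop :=
  (forall x, differentiable f x) /\
  (forall i : 'I_m, continuous (fun x => 'D_(ebasis i) f x)).

Definition C1vec (m k : nat) (f : 'cV[R]_m -> 'cV[R]_k) : Prop :=
  forall j : 'I_k, C1 (fun x => f x j 0).

Definition stack (n p : nat) (q : 'cV[R]_n) (xi : 'cV[R]_p) : 'cV[R]_(n + p) :=
  col_mx q xi.

Definition C1_2 (n p : nat) (V : 'cV[R]_n -> 'cV[R]_p -> R) : Prop :=
  C1 (fun z : 'cV[R]_(n + p) => V (usubmx z) (dsubmx z)).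

Definition grad_q (n p : nat) (V : 'cV[R]_n -> 'cV[R]_p -> R) q xi : 'cV[R]_n :=
  grad (fun q' => V q' xi) q.
Definition grad_xi (n p : nat) (V : 'cV[R]_n -> 'cV[R]_p -> R) q xi : 'cV[R]_p :=
  grad (fun xi' => V q xi') xi.

Definition locally_lipschitz (U W : normedModType R) (f : U -> W) : Prop :=
  forall x : U, exists2 r : R, 0 < r & exists L : R, forall y z : U,
    ball x r y -> ball x r z -> `|f y - f z| <= L * `|y - z|.

(* Lie derivatives of h0 along f0 and g0: L_f0 h0 = grad h0 . f0 (scalar),
   L_g0 h0 = grad h0^T g0 (row vector in R^p, stored as column) *)
Definition Lie_f (n : nat) (h0 : 'cV[R]_n -> R) (f0 : 'cV[R]_n -> 'cV[R]_n) q : R :=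
  dotv (grad h0 q) (f0 q).
Definition Lie_g (n p : nat) (h0 : 'cV[R]_n -> R) (g0 : 'cV[R]_n -> 'M[R]_(n, p)) q
  : 'cV[R]_p := (g0 q)^T *m grad h0 q.

Definition qdot (n p : nat) (f0 : 'cV[R]_n -> 'cV[R]_n) (g0 : 'cV[R]_n -> 'M[R]_(n, p))
  q xi : 'cV[R]_n := f0 q + g0 q *m xi.
Definition xidot (n p m : nat) (f1 : 'cV[R]_n -> 'cV[R]_p -> 'cV[R]_p)
  (g1 : 'cV[R]_n -> 'cV[R]_p -> 'M[R]_(p, m)) (k : 'cV[R]_n -> 'cV[R]_p -> 'cV[R]_m)
  q xi : 'cV[R]_p := f1 q xi + g1 q xi *m k q xi.

Definition Vdot (n p m : nat) f0 g0 f1 g1 k (V : 'cV[R]_n -> 'cV[R]_p -> R) q xi : R :=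
  dotv (grad_q V q xi) (@qdot n p f0 g0 q xi)
  + dotv (grad_xi V q xi) (@xidot n p m f1 g1 k q xi).

Definition cl_solution (n p m : nat) f0 g0 f1 g1 k (T : R)
  (qt : R -> 'cV[R]_n) (xit : R -> 'cV[R]_p) : Prop :=
  {within `[0, T], continuous qt} /\ {within `[0, T], continuous xit} /\
  (forall t, 0 < t < T ->
     is_derive t 1 qt (@qdot n p f0 g0 (qt t) (xit t)) /\
     is_derive t 1 xit (@xidot n p m f1 g1 k (qt t) (xit t))).

(* forward invariance of {(q,xi) | S q xi} for the closed-loop system: every
   closed-loop trajectory starting in the set stays in it on its interval of
   existence (any [0,T] contained in it). *)
Definition forward_invariant (n p m : nat) f0 g0 f1 g1 k
  (S : 'cV[R]_n -> 'cV[R]_p -> Prop) : Prop :=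
  forall (T : R) qt xit, 0 <= T -> @cl_solution n p m f0 g0 f1 g1 k T qt xit ->
    S (qt 0) (xit 0) -> forall t, 0 <= t <= T -> S (qt t) (xit t).

End Defs.

(* Main.v *)
Require Import Defs.
From HB Require Import structures.
From mathcomp Require Import all_boot all_order all_algebra.
From mathcomp Require Import all_classical all_reals all_analysis.
Import Order.TTheory GRing.Theory Num.Theory.
Import numFieldNormedType.Exports.
Local Open Scope classical_set_scope.
Local Open Scope ring_scope.

Set Implicit Arguments. Unset Strict Implicit.
Section H.
Variable R : realType.

Lemma vec_decomp (k : nat) (v : 'cV[R]_k) : v = \sum_i v i 0 *: ebasis R i.
Proof.
rewrite {1}(matrix_sum_delta v); apply: eq_bigr => i _.
by rewrite big_ord1.
Qed.

Lemma dE (k : nat) (f : 'cV[R]_k -> R) x v : differentiable f x ->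
  'd f x v = \sum_i v i 0 * 'D_(ebasis R i) f x.
Proof.
move=> df; rewrite {1}(vec_decomp v) linear_sum; apply: eq_bigr => i _.
by rewrite linearZ /= deriveE.
Qed.

Lemma dotv_grad (k : nat) (f : 'cV[R]_k -> R) x v :
  dotv (grad f x) v = \sum_i v i 0 * 'D_(ebasis R i) f x.
Proof. by apply: eq_bigr => i _; rewrite mxE mulrC. Qed.

Lemma col_mx_sum_l (n p k : nat) (F : 'I_k -> 'cV[R]_n) :
  col_mx (\sum_i F i) (0 : 'cV[R]_p) = \sum_i col_mx (F i) 0.
Proof.
elim/big_rec2: _ => [|i x y _ <-]; first by rewrite col_mx0.
by rewrite add_col_mx addr0.
Qed.

Lemma col_mx_sum_r (n p k : nat) (F : 'I_k -> 'cV[R]_p) :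
  col_mx (0 : 'cV[R]_n) (\sum_i F i) = \sum_i col_mx 0 (F i).
Proof.
elim/big_rec2: _ => [|i x y _ <-]; first by rewrite col_mx0.
by rewrite add_col_mx addr0.
Qed.

Lemma Dq_eq (n p : nat) (V : 'cV[R]_n -> 'cV[R]_p -> R) q xi (a : 'cV[R]_n) :
  'D_a (fun q' => V q' xi) q =
  'D_(col_mx a 0) (fun z : 'cV[R]_(n + p) => V (usubmx z) (dsubmx z)) (col_mx q xi).
Proof.
rewrite /derive. congr lim. apply: f_equal2 => //. apply/funext => h /=.
by rewrite scale_col_mx scaler0 add_col_mx add0r !col_mxKu !col_mxKd.
Qed.

Lemma Dxi_eq (n p : nat) (V : 'cV[R]_n -> 'cV[R]_p -> R) q xi (a : 'cV[R]_p) :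
  'D_a (fun xi' => V q xi') xi =
  'D_(col_mx 0 a) (fun z : 'cV[R]_(n + p) => V (usubmx z) (dsubmx z)) (col_mx q xi).
Proof.
rewrite /derive. congr lim. apply: f_equal2 => //. apply/funext => h /=.
by rewrite scale_col_mx scaler0 add_col_mx add0r !col_mxKu !col_mxKd.
Qed.

Lemma dF (n p : nat) (V : 'cV[R]_n -> 'cV[R]_p -> R) q xi a b :
  differentiable (fun z : 'cV[R]_(n + p) => V (usubmx z) (dsubmx z)) (col_mx q xi) ->
  'd (fun z : 'cV[R]_(n + p) => V (usubmx z) (dsubmx z)) (col_mx q xi) (col_mx a b)
  = dotv (grad_q V q xi) a + dotv (grad_xi V q xi) b.
Proof.
move=> dfz.
have -> : col_mx a b = col_mx a 0 + col_mx 0 b by rewrite add_col_mx addr0 add0r.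
rewrite linearD /=.
rewrite /grad_q /grad_xi !dotv_grad.
rewrite {1}(vec_decomp a) {1}(vec_decomp b) col_mx_sum_l col_mx_sum_r !linear_sum.
congr (_ + _); apply: eq_bigr => i _.
  have -> : col_mx (a i 0 *: ebasis R i) (0:'cV_p) = a i 0 *: col_mx (ebasis R i) 0 by rewrite scale_col_mx scaler0.
  by rewrite linearZ /= Dq_eq deriveE.
have -> : col_mx (0:'cV_n) (b i 0 *: ebasis R i) = b i 0 *: col_mx 0 (ebasis R i) by rewrite scale_col_mx scaler0.
by rewrite linearZ /= Dxi_eq deriveE.
Qed.
Lemma is_derive_col (n p : nat) (qt : R -> 'cV[R]_n) (xit : R -> 'cV[R]_p) (s : R) (a : 'cV[R]_n) (b : 'cV[R]_p) :
  is_derive s 1 qt a -> is_derive s 1 xit b ->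
  is_derive s 1 (fun s => col_mx (qt s) (xit s)) (col_mx a b).
Proof.
move=> Hq Hx.
have dq : derivable qt s 1 by [].
have dx : derivable xit s 1 by [].
have ez1 k j : (fun x => col_mx (qt x) (xit x) (lshift p k) j) = (fun x => qt x k j).
  by apply/funext => x; rewrite col_mxEu.
have ez2 k j : (fun x => col_mx (qt x) (xit x) (rshift n k) j) = (fun x => xit x k j).
  by apply/funext => x; rewrite col_mxEd.
have dz : derivable (fun s => col_mx (qt s) (xit s)) s 1.
  apply/derivable_mxP => i j; case: (split_ordP i) => k ->.
    by rewrite ez1; exact: (derivable_mxP _ _ _).1 dq k j.
  by rewrite ez2; exact: (derivable_mxP _ _ _).1 dx k j.
apply: DeriveDef => //; rewrite derive_mx //.
apply/matrixP => i j; rewrite mxE; case: (split_ordP i) => k ->.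
  by rewrite ez1 col_mxEu -(@derive_val _ _ _ _ _ _ _ Hq) derive_mx // mxE.
by rewrite ez2 col_mxEd -(@derive_val _ _ _ _ _ _ _ Hx) derive_mx // mxE.
Qed.
Lemma comp_derive (k : nat) (f : 'cV[R]_k -> R) (w : R -> 'cV[R]_k) (s : R) dw :
  is_derive s 1 w dw -> differentiable f (w s) ->
  is_derive s 1 (f \o w) ('d f (w s) dw).
Proof.
move=> Hw df.
have dw' : differentiable w s by apply/derivable1_diffP.
have dc := differentiable_comp dw' df.
apply: DeriveDef; first by apply/derivable1_diffP.
rewrite deriveE // diff_comp //=.
by rewrite -(deriveE _ dw') (@derive_val _ _ _ _ _ _ _ Hw).
Qed.

Lemma cvg_col (X : Type) (F : set_system X) (FF : Filter F) (n p : nat)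
  (u : X -> 'cV[R]_n) (w : X -> 'cV[R]_p) (a : 'cV[R]_n) (b : 'cV[R]_p) :
  u @ F --> a -> w @ F --> b -> (fun x => col_mx (u x) (w x)) @ F --> col_mx a b.
Proof.
move=> /cvg_mx_entourageP Hu /cvg_mx_entourageP Hw.
apply/cvg_mx_entourageP => A eA.
have := Hu A eA; have := Hw A eA; rewrite !near_map.
apply: filterS2 => x Hx1 Hx2 i j; case: (split_ordP i) => k ->.
  by rewrite !col_mxEu.
by rewrite !col_mxEd.
Qed.

Lemma dotvDr k (u v w : 'cV[R]_k) : dotv u (v + w) = dotv u v + dotv u w.
Proof. by rewrite /dotv -big_split; apply: eq_bigr => i _; rewrite mxE mulrDr. Qed.
Lemma dotvDl k (u v w : 'cV[R]_k) : dotv (v + w) u = dotv v u + dotv w u.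
Proof. by rewrite /dotv -big_split; apply: eq_bigr => i _; rewrite mxE mulrDl. Qed.
Lemma dotvZl k (c : R) (u v : 'cV[R]_k) : dotv (c *: u) v = c * dotv u v.
Proof. by rewrite /dotv big_distrr; apply: eq_bigr => i _; rewrite mxE -mulrA. Qed.
Lemma dotvZr k (c : R) (u v : 'cV[R]_k) : dotv u (c *: v) = c * dotv u v.
Proof. by rewrite /dotv big_distrr; apply: eq_bigr => i _; rewrite mxE mulrCA. Qed.
Lemma dotvC k (u v : 'cV[R]_k) : dotv u v = dotv v u.
Proof. by apply: eq_bigr => i _; rewrite mulrC. Qed.
Lemma sqnorm_ge0 k (u : 'cV[R]_k) : 0 <= sqnorm u.
Proof. by apply: sumr_ge0 => i _; rewrite -expr2 sqr_ge0. Qed.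
Lemma dotv_tr k (u v : 'cV[R]_k) : dotv u v = (u^T *m v) 0 0.
Proof. by rewrite mxE; apply: eq_bigr => i _; rewrite mxE. Qed.
Lemma dotv_mul k l (u : 'cV[R]_k) (M : 'M[R]_(k, l)) v :
  dotv u (M *m v) = dotv (M^T *m u) v.
Proof. by rewrite !dotv_tr mulmxA trmx_mul trmxK. Qed.
End H.

From mathcomp Require Import ring lra.

Theorem theorem13 (R : realType) (n p m : nat)
  (f0 : 'cV[R]_n -> 'cV[R]_n) (g0 : 'cV[R]_n -> 'M[R]_(n, p))
  (f1 : 'cV[R]_n -> 'cV[R]_p -> 'cV[R]_p)
  (g1 : 'cV[R]_n -> 'cV[R]_p -> 'M[R]_(p, m))
  (h0 : 'cV[R]_n -> R) (k0 : 'cV[R]_n -> 'cV[R]_p)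
  (k : 'cV[R]_n -> 'cV[R]_p -> 'cV[R]_m)
  (V : 'cV[R]_n -> 'cV[R]_p -> R)
  (alpha eps gamma1 gamma2 gamma delta mu : R) :
  locally_lipschitz f0 -> locally_lipschitz g0 ->
  locally_lipschitz (fun z : 'cV[R]_n * 'cV[R]_p => f1 z.1 z.2) ->
  locally_lipschitz (fun z : 'cV[R]_n * 'cV[R]_p => g1 z.1 z.2) ->
  C1 h0 -> C1vec k0 -> 0 < alpha -> 0 < eps ->
  (forall q, Lie_f h0 f0 q + dotv (Lie_g h0 g0 q) (k0 q)
             >= - alpha * h0 q + eps^-1 * sqnorm (Lie_g h0 g0 q)) ->
  C1_2 V -> (forall q xi, 0 <= V q xi) ->
  0 < gamma1 -> 0 < gamma2 -> 0 < gamma -> 0 < delta ->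
  (forall q xi, gamma1 * sqnorm (xi - k0 q) <= V q xi /\
                V q xi <= gamma2 * sqnorm (xi - k0 q)) ->
  (forall q xi, Vdot f0 g0 f1 g1 k V q xi <= - gamma * V q xi + delta) ->
  0 < mu ->
  gamma >= alpha + eps * mu / 4 ->
  forward_invariant f0 g0 f1 g1 k
    (fun q xi => 0 <= h0 q - (mu * gamma1)^-1 * (V q xi - delta / alpha)).
Proof.
move=> _ _ _ _ [dh0 _] _ alpha0 eps0 Hcbf [dV _] V0 g10 g20 gam0 del0 Hsand HVdot mu0 Hgam.
move=> T qt xit T0 [cq [cx dsol]] Hinit t /andP[t0 tT].
set c := (mu * gamma1)^-1.
have c0 : 0 < c by rewrite invr_gt0 mulr_gt0.
pose F := fun z : 'cV[R]_(n + p) => V (usubmx z) (dsubmx z).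
pose z := fun s => col_mx (qt s) (xit s).
pose H := fun s => h0 (qt s) - c * (F (z s) - delta / alpha).
have HE s : H s = h0 (qt s) - c * (V (qt s) (xit s) - delta / alpha).
  by rewrite /H /F /z col_mxKu col_mxKd.
pose g := fun s => expR (alpha * s) * H s.
suff : 0 <= g t by rewrite /g -HE pmulr_rge0 // expR_gt0.
have gz : 0 <= g 0 by rewrite /g mulr0 expR0 mul1r HE.
case: (eqVneq t 0) => [-> //| tn0].
have tpos : 0 < t by rewrite lt0r tn0 t0.
pose dH := fun s => dotv (grad h0 (qt s)) (qdot f0 g0 (qt s) (xit s))
   - c * Vdot f0 g0 f1 g1 k V (qt s) (xit s).
pose dg := fun s => alpha * expR (alpha * s) * H s + expR (alpha * s) * dH s.
have Hder : forall x, x \in `]0, t[ -> is_derive x 1 g (dg x).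
  move=> x; rewrite in_itv /= => /andP[x0 xt].
  have xT : 0 < x < T by rewrite x0 (lt_le_trans xt tT).
  have [Dq Dx] := dsol x xT.
  have HA : is_derive x 1 (h0 \o qt) (dotv (grad h0 (qt x)) (qdot f0 g0 (qt x) (xit x))).
    apply: is_derive_eq (comp_derive Dq (dh0 _)) _.
    by rewrite dE // dotv_grad.
  have HB : is_derive x 1 (F \o z) (Vdot f0 g0 f1 g1 k V (qt x) (xit x)).
    apply: is_derive_eq (comp_derive (is_derive_col Dq Dx) (dV _)) _.
    by rewrite dF.
  have Hlin : is_derive x 1 (fun s : R => alpha * s) alpha.
    apply: is_derive_eq (is_deriveZ alpha (is_derive_id x 1)) _.
    exact: mulr1.
  have Hexp : is_derive x 1 (fun s => expR (alpha * s)) (expR (alpha * x) * alpha).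
    exact: (is_derive1_comp (f := expR) (g := fun s : R => alpha * s)).
  have HH : is_derive x 1 H (dH x).
    have H1 : is_derive x 1 ((F \o z) - cst (delta / alpha)) (Vdot f0 g0 f1 g1 k V (qt x) (xit x) - 0).
      exact: is_deriveB.
    have H2 := is_deriveZ c H1.
    have H3 := is_deriveB HA H2.
    apply: is_derive_eq H3 _.
    by rewrite /dH subr0.
  have := is_deriveM Hexp HH.
  move=> H4; apply: is_derive_eq H4 _.
  rewrite /dg /= /GRing.scale /=; ring.
have cg : {within `[0, T], continuous g}.
  move=> x.
  apply: cvgM.
    have ce : continuous (fun s : R => expR (alpha * s)).
      move=> y; apply: (@continuous_comp _ _ _ (fun s : R => alpha * s) expR).
        by apply: cvgM; [exact: cvg_cst | exact: cvg_id].
      exact: continuous_expR.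
    have h1 : {within `[0, T], continuous (fun s : R => expR (alpha * s))} by exact: continuous_subspaceT.
    exact: (h1 x).
  apply: cvgB.
    exact: cvg_comp (cq x) (differentiable_continuous (dh0 _)).
  apply: cvgM; first exact: cvg_cst.
  apply: cvgB; last exact: cvg_cst.
  have hz := cvg_col (nbhs_filter x) (cq x) (cx x).
  exact: (cvg_comp _ F hz (differentiable_continuous (dV _))).
have cg' : {within `[0, t], continuous g}.
  apply: continuous_subspaceW cg => s /=; rewrite !in_itv /= => /andP[s0 st].
  by rewrite s0 (le_trans st tT).
have [y yin Hy] := MVT tpos Hder cg'.
have dgy : 0 <= dg y.
  have -> : dg y = expR (alpha * y) * (alpha * H y + dH y) by rewrite /dg; ring.
  apply: mulr_ge0; first exact: ltW (expR_gt0 _).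
  rewrite HE /dH /qdot dotvDr dotv_mul.
  set q := qt y; set xi := xit y.
  rewrite -/(Lie_f h0 f0 q) -/(Lie_g h0 g0 q).
  set L := Lie_g h0 g0 q; set e := xi - k0 q.
  have Ed : dotv L xi = dotv L (k0 q) + dotv L e by rewrite -dotvDr addrC subrK.
  rewrite Ed.
  have Hp := sqnorm_ge0 (2 *: L + eps *: e).
  rewrite /sqnorm dotvDl !dotvDr !dotvZl !dotvZr (dotvC e L) in Hp.
  have F1 := Hcbf q; rewrite /sqnorm -/L in F1.
  have [F3 _] := Hsand q xi; rewrite /sqnorm -/e in F3.
  have F4 := HVdot q xi.
  set LL := dotv L L in Hp F1; set LE := dotv L e in Hp *; set EE := dotv e e in Hp F3.
  set VD := Vdot f0 g0 f1 g1 k V q xi in F4 *.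
  set Vv := V q xi in F3 F4 *.
  have V0' : 0 <= Vv := V0 q xi.
  have F2 : - (eps^-1 * LL) - eps * EE / 4 <= LE.
    rewrite -subr_ge0.
    have -> : LE - (- (eps^-1 * LL) - eps * EE / 4) =
       eps^-1 / 4 * (2 * (2 * LL) + 2 * (eps * LE) + (eps * (2 * LE) + eps * (eps * EE))).
      by field; rewrite gt_eqF.
    by apply: mulr_ge0 => //; rewrite divr_ge0 // ltW // invr_gt0.
  have ha : alpha * (c * (delta / alpha)) = c * delta by field; rewrite gt_eqF.
  have h1 : c * VD <= c * (- gamma * Vv + delta) by rewrite ler_wpM2l // ltW.
  have h2 : 0 <= c * ((gamma - alpha) - eps * mu / 4) * Vv.
    apply: mulr_ge0 => //; apply: mulr_ge0; first exact: ltW.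
    by rewrite subr_ge0 lerBrDl.
  have h3 : 0 <= c * (eps * mu / 4) * (Vv - gamma1 * EE).
    apply: mulr_ge0; last by rewrite subr_ge0.
    apply: mulr_ge0; first exact: ltW.
    by apply: divr_ge0 => //; apply: mulr_ge0; exact: ltW.
  have h4 : c * (eps * mu / 4) * (gamma1 * EE) = eps * EE / 4.
    by rewrite /c; field; rewrite ?gt_eqF.
  nra.
have : 0 <= dg y * (t - 0) by rewrite subr0 mulr_ge0 // ltW.
rewrite -Hy. lra.
Qed.
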